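(* Let $\pi>0$, $\bar d>0$, $0<\theta_1<\dots<\theta_K$, $0\le\beta_1<\dots<\beta_M\le1$, $A:[0,D]\to[0,\bar d]$ continuously differentiable and decreasing. Let $L(Q,\beta,\theta)=\theta[\bar d-\beta A(Q)]-\pi(1-\beta)A(Q)$, $\bar S(Q,\Pi,\Lambda)=L(Q,\Lambda)-\Pi$ and $\sigma(Q,\beta,\theta)=-[\theta\beta+\pi(1-\beta)]A'(Q)$. Enumerate the $KM$ types $(\beta_m,\theta_k)$ as $\Lambda_1,\dots,\Lambda_{KM}$ with $\sigma(Q,\Lambda_1)\le\dots\le\sigma(Q,\Lambda_{KM})$, and let $\epsilon$ be an index such that $\bar S(Q,\Pi,\Lambda_\epsilon)\le\bar S(Q,\Pi,\Lambda_i)$ for all $i$ and all $(Q,\Pi)$. Define $\eta^-(\Lambda_i,Q_i,Q_{i-1})=L(Q_i,\Lambda_i)-L(Q_{i-1},\Lambda_i)$ and $\eta^+(\Lambda_i,Q_i,Q_{i+1})=L(Q_i,\Lambda_i)-L(Q_{i+1},\Lambda_i)$. A contract $\{(Q_i,\Pi_i)\}_{i=1}^{KM}$ with $Q_i\in[0,D]$ is feasible (i.e. $\bar S(Q_i,\Pi_i,\Lambda_i)\ge0$ for all $i$ and $\bar S(Q_i,\Pi_i,\Lambda_i)\ge\bar S(Q_j,\Pi_j,\Lambda_i)$ for all $i\ne j$) if all of the following hold: 1) $Q_1\le Q_2\le\dots\le Q_{KM}$; 2) $\Pi_\epsilon\le L(Q_\epsilon,\Lambda_\epsilon)$; 3)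 for all $i=1,\dots,\epsilon-1$: $\Pi_i\le\Pi_{i+1}+\eta^+(\Lambda_i,Q_i,Q_{i+1})$ and $\Pi_i\ge\Pi_{i+1}-\eta^-(\Lambda_{i+1},Q_{i+1},Q_i)$; 4) for all $i=\epsilon+1,\dots,KM$: $\Pi_i\le\Pi_{i-1}+\eta^-(\Lambda_i,Q_i,Q_{i-1})$ and $\Pi_i\ge\Pi_{i-1}-\eta^+(\Lambda_{i-1},Q_{i-1},Q_i)$.
   Context: Model: an operator offers one contract item (data cap $Q_i$, subscription fee $\Pi_i$) for each user type $\Lambda_i=(\beta,\theta)$ (network substitutability $\beta$, data valuation $\theta$). $\pi$ is the overage price, $\bar d$ the mean demand, $A(Q)$ the expected overage consumption under cap $Q$ (decreasing, convex). $L$ is the virtual payoff, $\bar S$ the expected payoff, $\sigma$ the willingness-to-pay (the ordering by $\sigma$ does not depend on $Q$), $\Lambda_\epsilon$ the smallest-payoff type (which exists and does not depend on $(Q,\Pi)$). *)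

(* Defs.v *)
From Stdlib Require Import Reals Lra.
From Coquelicot Require Import Coquelicot.
Open Scope R_scope.

Definition Lpay (pi dbar : R) (A : R -> R) (Q b t : R) : R :=
  t * (dbar - b * A Q) - pi * (1 - b) * A Q.

Definition Sbar (pi dbar : R) (A : R -> R) (Q Pi b t : R) : R :=
  Lpay pi dbar A Q b t - Pi.

Definition wtp (pi : R) (A' : R -> R) (Q b t : R) : R :=
  - (t * b + pi * (1 - b)) * A' Q.

(* eta^-(Lambda, Q_i, Q_{i-1}) and eta^+(Lambda, Q_i, Q_{i+1}) :
   both are L(Q_i,Lambda) - L(Q',Lambda); we keep the two names. *)
Definition eta_minus (pi dbar : R) (A : R -> R) (b t Qi Qprev : R) : R :=
  Lpay pi dbar A Qi b t - Lpay pi dbar A Qprev b t.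
Definition eta_plus (pi dbar : R) (A : R -> R) (b t Qi Qnext : R) : R :=
  Lpay pi dbar A Qi b t - Lpay pi dbar A Qnext b t.

Definition feasible (pi dbar : R) (A : R -> R) (N : nat)
    (bt th : nat -> R) (Q Pi : nat -> R) : Prop :=
  (forall i, (1 <= i <= N)%nat -> 0 <= Sbar pi dbar A (Q i) (Pi i) (bt i) (th i)) /\
  (forall i j, (1 <= i <= N)%nat -> (1 <= j <= N)%nat -> i <> j ->
     Sbar pi dbar A (Q j) (Pi j) (bt i) (th i) <= Sbar pi dbar A (Q i) (Pi i) (bt i) (th i)).

(* Main.v *)
Require Import Defs.
From Stdlib Require Import Reals Lra Lia Classical.
From Coquelicot Require Import Coquelicot.
Open Scope R_scope.



Lemma wcont (A : R -> R) (D x : R) :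
  filterlim A (within (fun y => 0 <= y <= D) (locally x)) (locally (A x)) ->
  forall eps, 0 < eps -> exists del, 0 < del /\
    forall y, 0 <= y <= D -> Rabs (y - x) < del -> Rabs (A y - A x) < eps.
Proof.
  intros H eps Heps.
  assert (Hl : locally (A x) (fun z => Rabs (z - A x) < eps)).
  { exists (mkposreal eps Heps). intros y Hy. exact Hy. }
  destruct (H _ Hl) as [d Hd].
  exists d. split. apply cond_pos. intros y Hy Hyx. apply (Hd y). exact Hyx. exact Hy.
Qed.

Lemma Aconst (A A' : R -> R) (D : R)
  (HAcont : forall x, 0 <= x <= D ->
     filterlim A (within (fun y => 0 <= y <= D) (locally x)) (locally (A x)))
  (HAder : forall x, 0 < x < D -> is_derive A x (A' x))
  (HAdec : forall x y, 0 <= x -> x <= y -> y <= D -> A y <= A x)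
  (Hpos : forall x, 0 <= x <= D -> 0 <= A' x) :
  forall q q', 0 <= q -> q <= q' -> q' <= D -> A q = A q'.
Proof.
  intros q q' H0 Hqq HqD.
  destruct (Req_dec (A q) (A q')) as [E|NE]; [exact E|exfalso].
  assert (Hlt : A q' < A q) by (specialize (HAdec q q' H0 Hqq HqD); lra).
  assert (Hne : q < q').
  { destruct (Req_dec q q'); [subst; lra|lra]. }
  set (dl := A q - A q').
  destruct (wcont A D q (HAcont q ltac:(lra)) (dl/3) ltac:(unfold dl; lra)) as [d1 [Hd1 H1]].
  destruct (wcont A D q' (HAcont q' ltac:(lra)) (dl/3) ltac:(unfold dl; lra)) as [d2 [Hd2 H2]].
  set (a := q + Rmin (d1/2) ((q'-q)/3)).
  set (b := q' - Rmin (d2/2) ((q'-q)/3)).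
  assert (Ha1 : 0 < Rmin (d1/2) ((q'-q)/3)) by (apply Rmin_pos; lra).
  assert (Ha2 : Rmin (d1/2) ((q'-q)/3) <= d1/2) by apply Rmin_l.
  assert (Ha3 : Rmin (d1/2) ((q'-q)/3) <= (q'-q)/3) by apply Rmin_r.
  assert (Hb1 : 0 < Rmin (d2/2) ((q'-q)/3)) by (apply Rmin_pos; lra).
  assert (Hb2 : Rmin (d2/2) ((q'-q)/3) <= d2/2) by apply Rmin_l.
  assert (Hb3 : Rmin (d2/2) ((q'-q)/3) <= (q'-q)/3) by apply Rmin_r.
  assert (Hab : a < b) by (unfold a, b; lra).
  assert (HAa : Rabs (A a - A q) < dl/3).
  { apply H1. unfold a; lra. unfold a. rewrite Rabs_right; lra. }
  assert (HAb : Rabs (A b - A q') < dl/3).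
  { apply H2. unfold b; lra. unfold b. rewrite Rabs_left; lra. }
  apply Rabs_def2 in HAa. apply Rabs_def2 in HAb.
  destruct (MVT_gen A a b A') as [c [Hc Heq]].
  - intros x Hx. rewrite Rmin_left in Hx by lra. rewrite Rmax_right in Hx by lra.
    apply HAder. unfold a, b in *; lra.
  - intros x Hx. rewrite Rmin_left in Hx by lra. rewrite Rmax_right in Hx by lra.
    apply continuity_pt_filterlim. apply (ex_derive_continuous A x).
    exists (A' x). apply HAder. unfold a, b in *; lra.
  - rewrite Rmin_left in Hc by lra. rewrite Rmax_right in Hc by lra.
    assert (0 <= A' c) by (apply Hpos; unfold a, b in *; lra).
    assert (0 <= A' c * (b - a)) by (apply Rmult_le_pos; lra).
    unfold dl in *; lra.
Qed.


Lemma core (N : nat) (D : R) (g : nat -> R -> R) (Q Pi : nat -> R)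
  (HID : forall i j q q', (1 <= i)%nat -> (i <= j)%nat -> (j <= N)%nat -> 0 <= q -> q <= q' -> q' <= D ->
      g i q' - g i q <= g j q' - g j q)
  (HQ : forall i, (1 <= i <= N)%nat -> 0 <= Q i <= D)
  (H1 : forall i, (1 <= i < N)%nat -> Q i <= Q (S i))
  (LIC : forall k, (1 <= k < N)%nat -> Pi k - Pi (S k) <= g k (Q k) - g k (Q (S k)) /\
         Pi (S k) - Pi k <= g (S k) (Q (S k)) - g (S k) (Q k)) :
  forall i j, (1 <= i <= N)%nat -> (1 <= j <= N)%nat -> g i (Q j) - Pi j <= g i (Q i) - Pi i.
Proof.
  intros i j Hi Hj.
  destruct (Nat.le_gt_cases i j) as [Hij|Hij].
  - assert (Hup : forall d, (i + d <= N)%nat -> g i (Q (i+d)%nat) - Pi (i+d)%nat <= g i (Q i) - Pi i).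
    { induction d as [|d IH]; intros Hd.
      + rewrite Nat.add_0_r; lra.
      + replace (i + S d)%nat with (S (i + d)) by lia.
        specialize (IH ltac:(lia)).
        destruct (LIC (i+d)%nat ltac:(lia)) as [L1 L2].
        pose proof (HQ (i+d)%nat ltac:(lia)). pose proof (HQ (S (i+d)) ltac:(lia)).
        pose proof (H1 (i+d)%nat ltac:(lia)).
        pose proof (HID i (i+d)%nat (Q (i+d)%nat) (Q (S (i+d))) ltac:(lia) ltac:(lia) ltac:(lia)
           ltac:(lra) ltac:(lra) ltac:(lra)).
        lra. }
    replace j with (i + (j - i))%nat by lia. apply Hup. lia.
  - assert (Hdn : forall d, (d < i)%nat -> g i (Q (i-d)%nat) - Pi (i-d)%nat <= g i (Q i) - Pi i).
    { induction d as [|d IH]; intros Hd.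
      + rewrite Nat.sub_0_r; lra.
      + specialize (IH ltac:(lia)).
        replace (i - d)%nat with (S (i - S d)) in IH by lia.
        set (k := (i - S d)%nat) in *.
        destruct (LIC k ltac:(unfold k; lia)) as [L1 L2].
        pose proof (HQ k ltac:(unfold k; lia)). pose proof (HQ (S k) ltac:(unfold k; lia)).
        pose proof (H1 k ltac:(unfold k; lia)).
        pose proof (HID (S k) i (Q k) (Q (S k)) ltac:(lia) ltac:(unfold k; lia) ltac:(lia)
           ltac:(lra) ltac:(lra) ltac:(lra)).
        lra. }
    replace j with (i - (i - j))%nat by lia. apply Hdn. lia.
Qed.

Theorem theorem2
  (pi dbar D : R) (K M : nat)
  (theta beta : nat -> R)            (* theta_1..theta_K, beta_1..beta_M (1-based) *)
  (A A' : R -> R)                    (* expected overage consumption and its derivative *)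
  (e : nat -> nat * nat)             (* enumeration: Lambda_i = (beta_(e i).1, theta_(e i).2) *)
  (eps : nat) (Q Pi : nat -> R)
  (* parameters *)
  (Hpi : 0 < pi) (Hdbar : 0 < dbar) (HD : 0 < D)
  (HK : (1 <= K)%nat) (HM : (1 <= M)%nat)
  (Htheta1 : 0 < theta 1%nat)
  (Htheta : forall k, (1 <= k < K)%nat -> theta k < theta (S k))
  (Hbeta1 : 0 <= beta 1%nat) (HbetaM : beta M <= 1)
  (Hbeta : forall m, (1 <= m < M)%nat -> beta m < beta (S m))
  (* A : [0,D] -> [0,dbar], continuously differentiable (derivative A'), decreasing *)
  (HArange : forall x, 0 <= x <= D -> 0 <= A x <= dbar)
  (HAcont : forall x, 0 <= x <= D ->
     filterlim A (within (fun y => 0 <= y <= D) (locally x)) (locally (A x)))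
  (HAder : forall x, 0 < x < D -> is_derive A x (A' x))
  (HA'cont : forall x, 0 <= x <= D ->
     filterlim A' (within (fun y => 0 <= y <= D) (locally x)) (locally (A' x)))
  (HAdec : forall x y, 0 <= x -> x <= y -> y <= D -> A y <= A x)
  (* enumeration of the K*M types: a bijection {1..KM} -> {1..M} x {1..K} *)
  (He_range : forall i, (1 <= i <= K * M)%nat ->
     (1 <= fst (e i) <= M)%nat /\ (1 <= snd (e i) <= K)%nat)
  (He_inj : forall i j, (1 <= i <= K * M)%nat -> (1 <= j <= K * M)%nat -> e i = e j -> i = j)
  (He_surj : forall m k, (1 <= m <= M)%nat -> (1 <= k <= K)%nat ->
     exists i, (1 <= i <= K * M)%nat /\ e i = (m, k))
  (* ordering by willingness to pay *)
  (Hsigma : forall Q0 i, 0 <= Q0 <= D -> (1 <= i < K * M)%nat ->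
     wtp pi A' Q0 (beta (fst (e i))) (theta (snd (e i)))
       <= wtp pi A' Q0 (beta (fst (e (S i)))) (theta (snd (e (S i)))))
  (* Lambda_eps has the smallest expected payoff *)
  (Heps_range : (1 <= eps <= K * M)%nat)
  (Heps : forall Q0 Pi0 i, 0 <= Q0 <= D -> (1 <= i <= K * M)%nat ->
     Sbar pi dbar A Q0 Pi0 (beta (fst (e eps))) (theta (snd (e eps)))
       <= Sbar pi dbar A Q0 Pi0 (beta (fst (e i))) (theta (snd (e i))))
  (* contract caps in [0,D] *)
  (HQ : forall i, (1 <= i <= K * M)%nat -> 0 <= Q i <= D)
  (* 1) monotone caps *)
  (H1 : forall i, (1 <= i < K * M)%nat -> Q i <= Q (S i))
  (* 2) *)
  (H2 : Pi eps <= Lpay pi dbar A (Q eps) (beta (fst (e eps))) (theta (snd (e eps))))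
  (* 3) *)
  (H3 : forall i, (1 <= i < eps)%nat ->
     Pi i <= Pi (S i) + eta_plus pi dbar A (beta (fst (e i))) (theta (snd (e i))) (Q i) (Q (S i)) /\
     Pi (S i) - eta_minus pi dbar A (beta (fst (e (S i)))) (theta (snd (e (S i)))) (Q (S i)) (Q i)
       <= Pi i)
  (* 4) *)
  (H4 : forall i, (eps < i <= K * M)%nat ->
     Pi i <= Pi (pred i) + eta_minus pi dbar A (beta (fst (e i))) (theta (snd (e i))) (Q i) (Q (pred i)) /\
     Pi (pred i) - eta_plus pi dbar A (beta (fst (e (pred i)))) (theta (snd (e (pred i)))) (Q (pred i)) (Q i)
       <= Pi i) :
  feasible pi dbar A (K * M)
    (fun i => beta (fst (e i))) (fun i => theta (snd (e i))) Q Pi.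
Proof.
  set (N := (K * M)%nat) in *.
  set (c := fun i => theta (snd (e i)) * beta (fst (e i)) + pi * (1 - beta (fst (e i)))).
  set (g := fun i q => Lpay pi dbar A q (beta (fst (e i))) (theta (snd (e i)))).
  assert (Hg : forall i q, g i q = theta (snd (e i)) * dbar - c i * A q).
  { intros; unfold g, c, Lpay; ring. }
  assert (HID : forall i j q q', (1 <= i)%nat -> (i <= j)%nat -> (j <= N)%nat -> 0 <= q -> q <= q' -> q' <= D ->
      g i q' - g i q <= g j q' - g j q).
  { intros i j q q' Hi Hij HjN Hq Hqq HqD.
    rewrite !Hg.
    destruct (classic (exists x, 0 <= x <= D /\ A' x < 0)) as [[x [Hx Hx']]|Hn].
    - assert (Hc : forall d, (i + d <= N)%nat -> c i <= c (i + d)%nat).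
      { induction d as [|d IH]; intros Hd.
        + rewrite Nat.add_0_r; lra.
        + specialize (IH ltac:(lia)).
          pose proof (Hsigma x (i + d)%nat Hx ltac:(lia)) as Hs.
          unfold wtp in Hs. replace (i + S d)%nat with (S (i + d)) by lia.
          fold (c (i+d)%nat) in Hs. fold (c (S (i+d))) in Hs.
          assert (c (i+d)%nat <= c (S (i+d))) by nra. lra. }
      pose proof (Hc (j - i)%nat ltac:(lia)) as Hcc.
      replace (i + (j - i))%nat with j in Hcc by lia.
      pose proof (HAdec q q' Hq Hqq HqD).
      nra.
    - assert (Hpos : forall x, 0 <= x <= D -> 0 <= A' x).
      { intros x Hx. destruct (Rle_or_lt 0 (A' x)) as [h|h]; auto.
        exfalso; apply Hn; exists x; auto. }
      rewrite (Aconst A A' D HAcont HAder HAdec Hpos q q' Hq Hqq HqD). lra. }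
  assert (LIC : forall k, (1 <= k < N)%nat -> Pi k - Pi (S k) <= g k (Q k) - g k (Q (S k)) /\
         Pi (S k) - Pi k <= g (S k) (Q (S k)) - g (S k) (Q k)).
  { intros k Hk. destruct (Nat.lt_ge_cases k eps) as [h|h].
    - destruct (H3 k ltac:(lia)) as [a b]. unfold eta_plus, eta_minus in *. unfold g. split; lra.
    - destruct (H4 (S k) ltac:(lia)) as [a b]. simpl pred in a, b.
      unfold eta_plus, eta_minus in *. unfold g. split; lra. }
  pose proof (core N D g Q Pi HID HQ H1 LIC) as IC.
  split.
  - intros i Hi.
    pose proof (IC i eps Hi Heps_range) as h1.
    pose proof (Heps (Q eps) (Pi eps) i (HQ eps Heps_range) Hi) as h2.
    unfold Sbar in *. unfold g in h1. lra.
  - intros i j Hi Hj _. pose proof (IC i j Hi Hj) as h. unfold Sbar, g in *. lra.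
Qed.
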